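(* Let $\mathcal{G}$ be a finite groupoid (finitely many objects and finite hom-sets) and let $Q$ be the quiver arising from it, with connected components $C_1,\dots,C_k$. Let $A$ be the adjacency matrix of $Q$ and let $A_{C_1},\dots,A_{C_k}$ be the diagonal blocks of $A$ corresponding to the connected components. Then for each $i$, the matrix $A_{C_i}\otimes A_{C_i}$ satisfies the quantum Yang–Baxter equation; equivalently, there exists a scalar $\mu_i$ with $A_{C_i}^2=\mu_i A_{C_i}$. Furthermore, there exists a single scalar $\mu$ with $A^2=\mu A$ if and only if $\mu_1=\mu_2=\dots=\mu_k$.
   Context: The quiver arising from a groupoid $\mathcal{G}$ has the objects of $\mathcal{G}$ as vertices and, for objects $x,y$, one arrow from $x$ to $y$ for each morphism in $\mathrm{Hom}(x,y)$ (identities included). Its adjacency matrix is $A_{xy}=|\mathrm{Hom}(x,y)|$. Connected components are the classes of objects $x,y$ with $\mathrm{Hom}(x,y)\neq\emptyset$, and $A_{C}$ is the principal submatrix of $A$ on the objects of $C$. An $m^2\times m^2$ matrix $X$ satisfies the quantum Yang–Baxter equation if $(X\otimes I_m)(I_m\otimes X)(X\otimes I_m)=(I_m\otimes X)(X\otimes I_m)(I_m\otimes X)$, where $\otimes$ is the Kronecker product and $I_m$ the $m\times m$ identity. *)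

(* Defs.v *)
From HB Require Import structures.
From mathcomp Require Import all_boot all_order all_algebra.
From mathcomp Require Export mxtens.
Set Implicit Arguments. Unset Strict Implicit. Unset Printing Implicit Defensive.
Import Order.TTheory GRing.Theory Num.Theory.
Local Open Scope ring_scope.

(* A finite groupoid with objects 'I_n, presented by its finite set of
   morphisms [mor], source/target maps, identities, composition and inverses.
   [comp g f] is g \o f, defined (meaningful) when tgt f = src g. *)
Record fin_groupoid (n : nat) := FinGroupoid {
  mor : finType;
  src : mor -> 'I_n;
  tgt : mor -> 'I_n;
  idm : 'I_n -> mor;
  comp : mor -> mor -> mor;
  inv : mor -> mor;
  src_idm : forall x, src (idm x) = x;
  tgt_idm : forall x, tgt (idm x) = x;
  src_comp : forall f g, tgt f = src g -> src (comp g f) = src f;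
  tgt_comp : forall f g, tgt f = src g -> tgt (comp g f) = tgt g;
  compA : forall f g h, tgt f = src g -> tgt g = src h ->
            comp h (comp g f) = comp (comp h g) f;
  comp_idr : forall f, comp f (idm (src f)) = f;
  comp_idl : forall f, comp (idm (tgt f)) f = f;
  src_inv : forall f, src (inv f) = tgt f;
  tgt_inv : forall f, tgt (inv f) = src f;
  comp_invl : forall f, comp (inv f) f = idm (src f);
  comp_invr : forall f, comp f (inv f) = idm (tgt f)
}.

Definition hom n (G : fin_groupoid n) (x y : 'I_n) : {set mor G} :=
  [set f | (src f == x) && (tgt f == y)].

Definition adj (R : pzRingType) n (G : fin_groupoid n) : 'M[R]_n :=
  \matrix_(x, y) (#|hom G x y|)%:R.

Definition component n (G : fin_groupoid n) (x : 'I_n) : {set 'I_n} :=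
  [set y | hom G x y != set0].

(* principal submatrix of A on the index set C (in the enumeration order of C) *)
Definition principal_submx (R : Type) n (A : 'M[R]_n) (C : {set 'I_n})
  : 'M[R]_#|C| :=
  \matrix_(i, j) A (enum_val i) (enum_val j).

Definition QYBE (R : pzRingType) (m : nat) (X : 'M[R]_(m * m)) : Prop :=
  let XI : 'M[R]_(m * m * m) := X *t (1%:M : 'M[R]_m) in
  let IX : 'M[R]_(m * m * m) :=
    castmx (mulnA m m m, mulnA m m m) ((1%:M : 'M[R]_m) *t X) in
  XI *m IX *m XI = IX *m XI *m IX.

(* Main.v *)
Require Import Defs.
From HB Require Import structures.
From mathcomp Require Import all_boot all_order all_algebra.
Import Order.TTheory GRing.Theory Num.Theory.
Local Open Scope ring_scope.
Set Implicit Arguments. Unset Strict Implicit.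

Lemma hom_ne n (G : fin_groupoid n) a b :
  reflect (exists f : mor G, src f = a /\ tgt f = b) (Defs.hom G a b != set0).
Proof.
apply: (iffP (set0Pn _)) => [[f]|[f [<- <-]]]; rewrite ?inE.
  by case/andP=> /eqP <- /eqP <-; exists f.
by exists f; rewrite inE !eqxx.
Qed.

Lemma hom_refl n (G : fin_groupoid n) a : Defs.hom G a a != set0.
Proof. by apply/hom_ne; exists (Defs.idm G a); rewrite src_idm tgt_idm. Qed.

Lemma hom_sym n (G : fin_groupoid n) a b : Defs.hom G a b != set0 -> Defs.hom G b a != set0.
Proof. by case/hom_ne=> f [sf tf]; apply/hom_ne; exists (Defs.inv f); rewrite src_inv tgt_inv. Qed.

Lemma hom_trans n (G : fin_groupoid n) a b c :
  Defs.hom G a b != set0 -> Defs.hom G b c != set0 -> Defs.hom G a c != set0.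
Proof.
case/hom_ne=> f [sf tf]; case/hom_ne=> g [sg tg]; apply/hom_ne; exists (Defs.comp g f).
have e : tgt f = src g by rewrite tf sg.
by rewrite (src_comp e) (tgt_comp e).
Qed.

Lemma hom_card_le n (G : fin_groupoid n) a' a b b' :
  Defs.hom G a' a != set0 -> Defs.hom G b b' != set0 -> (#|Defs.hom G a b| <= #|Defs.hom G a' b'|)%N.
Proof.
case/hom_ne=> f [sf tf]; case/hom_ne=> g [sg tg].
pose phi h := Defs.comp g (Defs.comp h f).
have rec : {in Defs.hom G a b, forall h, Defs.comp (Defs.comp (Defs.inv g) (phi h)) (Defs.inv f) = h}.
  move=> h; rewrite inE => /andP[/eqP sh /eqP th].
  have e1 : tgt f = src h by rewrite tf sh.
  have e2 : tgt (Defs.comp h f) = src g by rewrite (tgt_comp e1) th sg.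
  rewrite /phi (Defs.compA e2 (esym (src_inv g))) comp_invl -e2 comp_idl.
  have e3 : tgt (Defs.inv f) = src f by rewrite tgt_inv.
  by rewrite -(Defs.compA e3 e1) comp_invr e1 comp_idr.
have inj : {in Defs.hom G a b &, injective phi}.
  by move=> h1 h2 H1 H2 E; rewrite -(rec _ H1) -(rec _ H2) E.
rewrite -(card_in_imset inj); apply: subset_leq_card; apply/subsetP=> k.
case/imsetP=> h; rewrite inE => /andP[/eqP sh /eqP th] ->.
have e1 : tgt f = src h by rewrite tf sh.
have e2 : tgt (Defs.comp h f) = src g by rewrite (tgt_comp e1) th sg.
by rewrite inE /phi (src_comp e2) (src_comp e1) (tgt_comp e2) sf tg !eqxx.
Qed.

Lemma card_hom n (G : fin_groupoid n) x y z :
  y \in component G x -> z \in component G x -> #|Defs.hom G y z| = #|Defs.hom G x x|.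
Proof.
rewrite !inE => hy hz; apply/eqP; rewrite eqn_leq.
by rewrite (hom_card_le hy (hom_sym hz)) (hom_card_le (hom_sym hy) hz).
Qed.

Lemma component_eq n (G : fin_groupoid n) x y :
  y \in component G x -> component G y = component G x.
Proof.
rewrite inE => hy; apply/setP=> z; rewrite !inE; apply/idP/idP => h.
  exact: hom_trans hy h.
exact: hom_trans (hom_sym hy) h.
Qed.

Lemma tensmxZl (R : comPzRingType) m n p q (a : R) (M : 'M[R]_(m,n)) (N : 'M[R]_(p,q)) :
  (a *: M) *t N = a *: (M *t N).
Proof. by apply/matrixP=> i j; rewrite !mxE mulrA. Qed.

Lemma tensmxZr (R : comPzRingType) m n p q (a : R) (M : 'M[R]_(m,n)) (N : 'M[R]_(p,q)) :
  M *t (a *: N) = a *: (M *t N).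
Proof. by apply/matrixP=> i j; rewrite !mxE mulrCA. Qed.

Lemma idx_assoc m p r (a : 'I_m) (b : 'I_p) (c : 'I_r) :
  cast_ord (esym (mulnA m p r)) (mxtens_index (mxtens_index (a, b), c))
  = mxtens_index (a, mxtens_index (b, c)).
Proof. by apply: val_inj => /=; rewrite mulnDl -mulnA addnA. Qed.

Lemma tensmxA (R : pzRingType) m n p q r s
  (A : 'M[R]_(m,n)) (B : 'M[R]_(p,q)) (C : 'M[R]_(r,s)) :
  castmx (mulnA m p r, mulnA n q s) (A *t (B *t C)) = (A *t B) *t C.
Proof.
apply/matrixP=> i j; rewrite castmxE.
case: (mxtens_indexP i) => i1 i2; case: (mxtens_indexP i1) => i11 i12.
case: (mxtens_indexP j) => j1 j2; case: (mxtens_indexP j1) => j11 j12.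
have E1 := idx_assoc i11 i12 i2.
have E2 := idx_assoc j11 j12 j2.
by rewrite /= E1 E2 !tensmxE mulrA.
Qed.

Lemma AC_const (R : pzRingType) n (G : fin_groupoid n) x :
  principal_submx (adj R G) (component G x) = const_mx (#|Defs.hom G x x|%:R).
Proof.
by apply/matrixP => i j; rewrite !mxE (card_hom (enum_valP i) (enum_valP j)).
Qed.

Lemma const_mul (R : pzRingType) c (a : R) :
  (const_mx a : 'M_c) *m (const_mx a : 'M_c) = (c%:R * a) *: (const_mx a : 'M_c).
Proof.
apply/matrixP=> i j; rewrite !mxE.
under eq_bigr => k _ do rewrite !mxE.
by rewrite sumr_const card_ord -mulrA mulr_natl.
Qed.

Lemma qybe_tens (R : comPzRingType) c (B : 'M[R]_c) mu :
  B *m B = mu *: B -> QYBE (B *t B).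
Proof.
move=> hB; rewrite /QYBE /=.
rewrite tensmxA !tensmx_mul !mul1mx !mulmx1 hB -scalemxAl hB.
rewrite !tensmxZl !tensmxZr !scalerA.
by [].
Qed.


Lemma adjE (R : numFieldType) n (G : fin_groupoid n) y z :
  adj R G y z = (if z \in component G y then #|Defs.hom G y y| else 0)%:R.
Proof.
rewrite mxE; case: ifP => h.
  by rewrite (card_hom (y:=y) _ h) // inE hom_refl.
by move: h; rewrite inE => /negbFE/eqP ->; rewrite cards0.
Qed.

Lemma adj2E (R : numFieldType) n (G : fin_groupoid n) y z :
  (adj R G *m adj R G) y z =
  (if z \in component G y then #|component G y| * #|Defs.hom G y y| * #|Defs.hom G y y| else 0)%N%:R.
Proof.
rewrite mxE; under eq_bigr => w _ do rewrite !adjE.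
case: ifP => hz.
  rewrite (eq_bigr (fun w => if w \in component G y then (#|Defs.hom G y y| * #|Defs.hom G y y|)%N%:R else 0)).
    by rewrite -big_mkcond /= sumr_const -mulrnA mulnC mulnA.
  move=> w _; case: ifP => hw; last by rewrite mul0r.
  rewrite (component_eq hw) hz -natrM; congr (_ * _)%:R.
  by apply: (card_hom (x:=y)); rewrite // inE hom_refl.
rewrite big1 // => w _; case: ifP => hw; last by rewrite mul0r.
by rewrite (component_eq hw) hz mulr0.
Qed.

Lemma hom_card_gt0 n (G : fin_groupoid n) y : (0 < #|Defs.hom G y y|)%N.
Proof. by rewrite card_gt0 hom_refl. Qed.

Unset Implicit Arguments.

Theorem proposition2p12 (R : numFieldType) (n : nat) (G : fin_groupoid n) :
  let A := adj R G in
  let AC := fun x : 'I_n => principal_submx A (component G x) in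
  (forall x : 'I_n,
     QYBE (AC x *t AC x) /\ exists mu : R, AC x *m AC x = mu *: AC x) /\
  (forall mu_ : 'I_n -> R,
     (forall x : 'I_n, AC x *m AC x = mu_ x *: AC x) ->
     ((exists mu : R, A *m A = mu *: A) <-> (forall x y : 'I_n, mu_ x = mu_ y))).
Proof.
move=> A AC.
have hsq x : AC x *m AC x = (#|component G x| * #|Defs.hom G x x|)%N%:R *: AC x.
  by rewrite /AC AC_const const_mul natrM.
have m0 y : (#|Defs.hom G y y|%:R : R) != 0.
  by rewrite pnatr_eq0 -lt0n hom_card_gt0.
split=> [x|mu_ hmu].
  split; last by exists (#|component G x| * #|Defs.hom G x x|)%N%:R.
  exact: qybe_tens (hsq x).
have xin x : x \in component G x by rewrite inE hom_refl.
have muE x : mu_ x = (#|component G x| * #|Defs.hom G x x|)%N%:R.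
  have := hmu x; rewrite hsq => /matrixP/(_ (enum_rank_in (xin x) x) (enum_rank_in (xin x) x)).
  by rewrite /AC AC_const !mxE => /(mulIf (m0 x)) ->.
split=> [[mu hA] x y|hall].
  suff h z : mu_ z = mu by rewrite !h.
  move/matrixP: hA => /(_ z z); rewrite adj2E mxE adjE (xin z) -mulr_natr natrM.
  by rewrite mul1r => /(mulIf (m0 z)) <-; rewrite muE.
case: (pickP (@predT 'I_n)) => [x0 _|h0]; last first.
  by exists 0; apply/matrixP => y; have := h0 y.
exists (mu_ x0); apply/matrixP => y z.
rewrite adj2E mxE adjE; case: ifP => _; last by rewrite mulr0.
by rewrite (hall x0 y) muE -natrM.
Qed.
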